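(* Let $V$ and $W$ be pfd $B$-persistence modules and $\epsilon\ge0$. (1) $\mathscr{B}_{2\epsilon}(V^{\mathcal{L}})=\mathscr{B}(V^{\mathcal{L}})$ and $\mathscr{B}_{2\epsilon}(W^{\mathcal{L}})=\mathscr{B}(W^{\mathcal{L}})$. (2) Let $G$ be the bipartite graph with vertex multisets $\mathscr{B}(V^{\mathcal{L}})$ and $\mathscr{B}(W^{\mathcal{L}})$, with an edge between $M$ and $N$ iff $M$ and $N$ are $\Lambda_\epsilon$-interleaved. Suppose $V^{\mathcal{L}}$ and $W^{\mathcal{L}}$ are $\Lambda_\epsilon$-interleaved. Then: - the full subgraph $G(\mathscr{B}_{2\epsilon}(V^{\mathcal{L}}),\mathscr{B}(W^{\mathcal{L}}))$ satisfies Hall's condition (H): every finite $X\subseteq\mathscr{B}_{2\epsilon}(V^{\mathcal{L}})$ has $|X|\le|N(X)|$; - the full subgraph $G(\mathscr{B}(V^{\mathcal{L}}),\mathscr{B}_{2\epsilon}(W^{\mathcal{L}}))$ satisfies (H'): every finite $Y\subseteq\mathscr{B}_{2\epsilon}(W^{\mathcal{L}})$ has $|Y|\le|N(Y)|$. Here $N(\cdot)$ denotes the set of neighbours in $G$. Consequently, if $V^{\mathcal{L}}$ and $W^{\mathcal{L}}$ are $\Lambda_\epsilon$-interleaved, then there exists a bottleneck $\Lambda_\epsilon$-interleaving between them.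
   Context: Let $k$ be a field. The bipath poset $B$ has underlying set $(\mathbb{R}\times\{1,2\})\sqcup\{-\infty,+\infty\}$. Its order is: $x\le y$ iff $x=-\infty$, or $y=+\infty$, or $x=(s,i)$, $y=(t,i)$ with the same $i$ and $s\le t$. $B$-persistence modules are functors from $B$ (as a category) to $k$-vector spaces; pfd means all spaces are finite-dimensional. An interval of $B$ is a nonempty convex and connected subset. Every pfd $B$-module decomposes uniquely (up to isomorphism and permutation) into interval modules $k_I$; $\mathscr{B}(V)$ is the multiset of these summands (elements counted with multiplicity, each a separate vertex). $\mathcal{L}$ is the set of intervals $\neq B$ containing $-\infty$. $V^{\mathcal{L}}$ is the direct sum of the interval summands of $V$ whose interval lies in $\mathcal{L}$. For $\epsilon\ge0$, $\Lambda_\epsilon$ sends $(r,i)\mapsto(r+\epsilon,i)$ and fixes $\pm\infty$. Then: - $V(\epsilon)_b=V_{\Lambda_\epsilon b}$ and $V(\epsilon)(b,b')=V(\Lambda_\epsilon b,\Lambda_\epsilon b')$; $\phi(\epsilon)$ has components $\phi_{\Lambda_\epsilon b}$; - $V_{0\to\epsilon}$ has components $V(b,\Lambda_\epsilon b)$; - $V$ is $\Lambda_\epsilon$-trivial if $V_{0\to\epsilon}=0$, and $\Lambda_\epsilon$-significant otherwise; - $\mathscr{B}_{2\epsilon}(V)$ is the submultiset of $\Lambda_{2\epsilon}$-significant summands in $\mathscr{B}(V)$; - a $\Lambda_\epsilon$-interleaving is a pair $\alpha\colon V\to W(\epsilon)$, $\beta\colon W\to V(\epsilon)$ with $\beta(\epsilon)\alpha=V_{0\to2\epsilon}$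 and $\alpha(\epsilon)\beta=W_{0\to2\epsilon}$; - a bottleneck $\Lambda_\epsilon$-interleaving is a bijection $\sigma$ between submultisets of $\mathscr{B}(V)$ and $\mathscr{B}(W)$ such that all unmatched summands are $\Lambda_{2\epsilon}$-trivial and each matched pair is $\Lambda_\epsilon$-interleaved. A full subgraph $G(X',Y')$ has vertex sets $X'$, $Y'$ and all edges of $G$ between them. *)

(* Defs.v *)
From Stdlib Require Import Reals.
From mathcomp Require Import all_boot all_order all_algebra.
Set Implicit Arguments. Unset Strict Implicit. Unset Printing Implicit Defensive.
Import GRing.Theory.
Local Open Scope ring_scope.

(* The bipath poset B = (R x {1,2}) ⊔ {-oo, +oo}.                       *)
Inductive lane := One | Two.

Definition lane_eqb (i j : lane) : bool :=
  match i, j with One, One | Two, Two => true | _, _ => false end.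

Inductive bpt :=
| NegInf : bpt
| Pt : R -> lane -> bpt
| PosInf : bpt.

Definition Rleb (s t : R) : bool := if Rle_dec s t then true else false.

Definition ble (x y : bpt) : bool :=
  match x, y with
  | NegInf, _ => true
  | _, PosInf => true
  | Pt s i, Pt t j => lane_eqb i j && Rleb s t
  | _, _ => false
  end.

Definition bcomparable (x y : bpt) : bool := ble x y || ble y x.

Definition lam (eps : R) (b : bpt) : bpt :=
  match b with Pt r i => Pt (Rplus r eps) i | _ => b end.

Definition interval (I : pred bpt) : Prop :=
  [/\ exists b, I b,
      (forall x y z, I x -> I z -> ble x y -> ble y z -> I y) &
      (forall x y, I x -> I y ->
         exists s : seq bpt, [/\ all I s, path bcomparable x s & last x s = y])].

Definition inL (I : pred bpt) : Prop :=
  [/\ interval I, I NegInf & exists b, ~~ I b].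

(* pfd B-persistence modules, presented concretely: a finite dimension *)
(* at each point and a structure matrix (row-vector convention, i.e.   *)
(* v |-> v *m bmap b b') for each pair b <= b'.  Every pfd module is   *)
(* isomorphic to such a presentation.                                  *)
Section Modules.
Variable k : fieldType.

Record bmod := BMod {
  bdim : bpt -> nat;
  bmap : forall b b' : bpt, 'M[k]_(bdim b, bdim b')
}.

Definition is_bmod (V : bmod) : Prop :=
  (forall b, bmap V b b = 1%:M) /\
  (forall b b' b'', ble b b' -> ble b' b'' ->
     bmap V b b' *m bmap V b' b'' = bmap V b b'').

Definition is_morph (V W : bmod) (f : forall b, 'M[k]_(bdim V b, bdim W b)) : Prop :=
  forall b b', ble b b' -> bmap V b b' *m f b' = f b *m bmap W b b'.

Definition shift (eps : R) (V : bmod) : bmod :=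
  @BMod (fun b => bdim V (lam eps b)) (fun b b' => bmap V (lam eps b) (lam eps b')).

Definition triv (delta : R) (V : bmod) : Prop :=
  forall b, bmap V b (lam delta b) = 0.

Definition significant (delta : R) (V : bmod) : Prop := ~ triv delta V.

(* Here V_{0->2eps} has components V(b, Lambda_{2eps} b) = V(b, Lambda_eps (Lambda_eps b)). *)
Definition interleaved (eps : R) (V W : bmod) : Prop :=
  exists (alpha : forall b, 'M[k]_(bdim V b, bdim W (lam eps b)))
         (beta : forall b, 'M[k]_(bdim W b, bdim V (lam eps b))),
    [/\ is_morph (V := V) (W := shift eps W) alpha,
        is_morph (V := W) (W := shift eps V) beta,
        (forall b, alpha b *m beta (lam eps b) = bmap V b (lam eps (lam eps b))) &
        (forall b, beta b *m alpha (lam eps b) = bmap W b (lam eps (lam eps b)))].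

Definition ivmod (I : pred bpt) : bmod :=
  @BMod (fun b => nat_of_bool (I b)) (fun b b' => const_mx 1).

(* finite direct sum of interval modules (+)_{p < m} k_{X p}; the basis at b
   is indexed by the p with b \in X p, in increasing order *)
Definition dsum_idx (m : nat) (X : 'I_m -> pred bpt) (b : bpt) : seq nat :=
  [seq val p | p <- enum 'I_m & X p b].

Definition dsum (m : nat) (X : 'I_m -> pred bpt) : bmod :=
  @BMod (fun b => size (dsum_idx X b))
        (fun b b' => \matrix_(a, c)
           ((nth 0%N (dsum_idx X b) a == nth 0%N (dsum_idx X b') c) : nat)%:R).

(* (I, J) is the barcode of V, i.e. V is isomorphic to (+)_{i : I} k_{J i}:
   the isomorphism is given by the images e i b of the generators of the
   summands, which form a basis of V_b at each b, and are carried along by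
   the structure maps exactly as in k_{J i}. *)
Definition is_barcode (V : bmod) (I : Type) (J : I -> pred bpt) : Prop :=
  (forall i, interval (J i)) /\
  exists e : I -> forall b, 'rV[k]_(bdim V b),
    (forall b, exists s : seq I,
        (forall i, J i b <-> List.In i s) /\
        basis_of fullv [seq e i b | i <- s]) /\
    (forall i b b', ble b b' -> J i b ->
        e i b *m bmap V b b' = if J i b' then e i b' else 0).

(* f enumerates (without repetition) the summands of the barcode whose
   interval lies in L; these are the summands of V^L. *)
Definition enumL (I : Type) (J : I -> pred bpt) (m : nat) (f : 'I_m -> I) : Prop :=
  [/\ injective f, (forall p, inL (J (f p))) &
      (forall i, inL (J i) -> exists p, f p = i)].

Definition hall (m n : nat) (P : 'I_m -> Prop) (E : 'I_m -> 'I_n -> Prop) : Prop :=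
  forall X : {set 'I_m}, (forall p, p \in X -> P p) ->
    exists NX : {set 'I_n},
      (forall q, q \in NX <-> exists2 p, p \in X & E p q) /\ (#|X| <= #|NX|)%N.

(* bottleneck Lambda_eps-interleaving between (+)_p k_{X p} and (+)_q k_{Y q}:
   a partial injection sigma (a bijection between sub-multisets) matching
   only Lambda_eps-interleaved pairs, all unmatched summands Lambda_{2eps}-trivial. *)
Definition bottleneck (eps : R) (m n : nat) (X : 'I_m -> pred bpt) (Y : 'I_n -> pred bpt) : Prop :=
  exists sigma : 'I_m -> option 'I_n,
    [/\ (forall p p' q, sigma p = Some q -> sigma p' = Some q -> p = p'),
        (forall p q, sigma p = Some q -> interleaved eps (ivmod (X p)) (ivmod (Y q))),
        (forall p, sigma p = None -> triv (Rplus eps eps) (ivmod (X p))) &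
        (forall q, (forall p, sigma p <> Some q) -> triv (Rplus eps eps) (ivmod (Y q)))].

End Modules.

(* Main.v *)
Require Import Defs.
From Stdlib Require Import Reals.
From mathcomp Require Import all_boot all_order all_algebra.
From Stdlib Require Import Lra ClassicalEpsilon Classical.
Set Implicit Arguments. Unset Strict Implicit. Unset Printing Implicit Defensive.

Section Hall.
Variables (T U : finType) (E : T -> U -> bool).

Definition nbh (X : {set T}) (B : {set U}) := [set y in B | [exists x in X, E x y]].

Lemma nbhU X Y B : nbh (X :|: Y) B = nbh X B :|: nbh Y B.
Proof.
apply/setP => y; rewrite !inE.
case: (y \in B) => //=.
apply/existsP/orP.
- case=> x /andP[]; rewrite inE => /orP[] Hx Exy.
  + by left; apply/existsP; exists x; rewrite Hx.
  + by right; apply/existsP; exists x; rewrite Hx.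
- case; move/existsP=> [x /andP[Hx Exy]]; exists x; by rewrite inE Hx ?orbT.
Qed.

Lemma nbh_sub X (B B' : {set U}) : B \subset B' -> nbh X B \subset nbh X B'.
Proof.
move=> sB; apply/subsetP => y; rewrite !inE => /andP[yB ->]; by rewrite (subsetP sB).
Qed.

Lemma hall_thm : forall (A : {set T}) (B : {set U}),
  (forall X : {set T}, X \subset A -> #|X| <= #|nbh X B|) ->
  exists f : T -> option U,
    (forall x, x \in A -> exists2 y, f x = Some y & (y \in B) && E x y) /\
    (forall x x' y, x \in A -> x' \in A -> f x = Some y -> f x' = Some y -> x = x').
Proof.
move=> A0.
elim: {A0}_.+1 {-2}A0 (ltnSn #|A0|) => // c IH A Acard B hH.
case: (boolP [exists X : {set T}, [&& X \subset A, X != set0, X != A & #|nbh X B| <= #|X|]]).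
- case/existsP => X /and4P[XA X0 XnA tight].
  have XpA : X \proper A by rewrite properEneq XnA.
  have [f1 [f1E f1I]] := IH X (leq_trans (proper_card XpA) Acard) B
     (fun Y YX => hH Y (subset_trans YX XA)).
  have A'pA : A :\: X \proper A.
    rewrite properEneq subsetDl andbT; apply/negP => /eqP e.
    case/set0Pn: X0 => x xX.
    by move: (subsetP XA x xX); rewrite -e inE xX.
  have hY : forall Y : {set T}, Y \subset A :\: X -> #|Y| <= #|nbh Y (B :\: nbh X B)|.
    move=> Y YA'.
    have YX : [disjoint Y & X].
      rewrite -setI_eq0; apply/eqP/setP => x; rewrite !inE.
      apply/negP => /andP[xY xX]; by move: (subsetP YA' x xY); rewrite !inE xX.
    have := hH (Y :|: X); rewrite subUset XA (subset_trans YA' (subsetDl _ _)) => /(_ isT).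
    have -> : #|Y :|: X| = #|Y| + #|X|.
      by rewrite cardsU; move: YX; rewrite -setI_eq0 => /eqP ->; rewrite cards0 subn0.
    move=> H.
    have : #|nbh (Y :|: X) B| <= #|nbh Y (B :\: nbh X B)| + #|X|.
      apply: leq_trans (leq_add (leqnn _) tight).
      rewrite addnC; apply: leq_trans (leq_card_setU _ _).
      apply: subset_leq_card; apply/subsetP => y; rewrite nbhU !inE.
      case/orP => [/andP[yB yY]|->]; last by [].
      rewrite yB yY /=.
      by case: [exists x in X, E x y].
    rewrite addnC => H2.
    by rewrite -(leq_add2l #|X|) addnC; apply: leq_trans H H2.
  have [f2 [f2E f2I]] := IH (A :\: X) (leq_trans (proper_card A'pA) Acard) _ hY.
  exists (fun x => if x \in X then f1 x else f2 x); split.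
  + move=> x xA; case: ifP => xX; first exact: f1E.
    case: (f2E x); first by rewrite inE xX xA.
    move=> y -> /andP[]; rewrite inE => /andP[_ yB] Exy; exists y => //.
    by rewrite yB.
  + move=> x x' y xA x'A.
    case: ifP => xX; case: ifP => x'X.
    * exact: f1I.
    * move=> e1 e2; case: (f1E x xX) => y1; rewrite e1 => -[<-] /andP[yB Exy].
      case: (f2E x'); first by rewrite inE x'X.
      move=> y2; rewrite e2 => -[<-]; rewrite !inE yB andbT => /andP[/negP[]].
      by apply/existsP; exists x; rewrite xX.
    * move=> e1 e2; case: (f1E x' x'X) => y1; rewrite e2 => -[<-] /andP[yB Exy].
      case: (f2E x); first by rewrite inE xX.
      move=> y2; rewrite e1 => -[<-]; rewrite !inE yB andbT => /andP[/negP[]].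
      by apply/existsP; exists x'; rewrite x'X.
    * by apply: f2I; rewrite inE ?xX ?x'X.
- move=> Hnt.
  have loose : forall X : {set T}, X \subset A -> X != set0 -> X != A -> #|X| < #|nbh X B|.
    move=> X XA X0 XA'; rewrite ltnNge; apply/negP => H.
    by move/negP: Hnt; apply; apply/existsP; exists X; rewrite XA X0 XA' H.
  case: (set_0Vmem A) => [-> | [a aA]].
    by exists (fun _ => None); split => // x; rewrite inE.
  have : 0 < #|nbh [set a] B|.
    by apply: leq_trans (hH [set a] _); rewrite ?cards1 // sub1set.
  case/card_gt0P => b; rewrite inE => /andP[bB /existsP[a' /andP[]]]; rewrite inE => /eqP -> Eab.
  have A'pA : A :\ a \proper A by apply: properD1.
  have hY : forall Y : {set T}, Y \subset A :\ a -> #|Y| <= #|nbh Y (B :\ b)|.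
    move=> Y YA.
    case: (set_0Vmem Y) => [-> | [y yY]]; first by rewrite cards0.
    have YA' : Y \subset A by apply: subset_trans YA (subsetDl _ _).
    have YnA : Y != A.
      by apply/eqP => e; move: (subsetP YA a); rewrite e aA !inE eqxx => /(_ isT).
    have Y0 : Y != set0 by apply/set0Pn; exists y.
    have := loose Y YA' Y0 YnA.
    move=> H; rewrite -ltnS; apply: leq_trans H _.
    rewrite (cardsD1 b (nbh Y B)) -add1n; apply: leq_add; first exact: leq_b1.
    apply: subset_leq_card; apply/subsetP => z; rewrite !inE.
    by case/andP=> -> /andP[-> ->].
  have [f2 [f2E f2I]] := IH (A :\ a) (leq_trans (proper_card A'pA) Acard) _ hY.
  exists (fun x => if x == a then Some b else f2 x); split.
  + move=> x xA; case: eqP => [->|xa]; first by exists b; rewrite ?bB.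
    case: (f2E x); first by rewrite !inE xA andbT; apply/eqP.
    move=> y -> /andP[]; rewrite !inE => /andP[_ yB] Exy; exists y => //.
    by rewrite yB.
  + move=> x x' y xA x'A.
    case: eqP => [->|xa]; case: eqP => [->|x'a] //.
    * move=> e1 e2; have {e1} e1 : b = y := congr1 (odflt b) e1.
      subst y; case: (f2E x'); first by rewrite !inE x'A andbT; apply/eqP.
      by move=> y2; rewrite e2 => -[<-]; rewrite !inE eqxx.
    * move=> e1 e2; have {e2} e2 : b = y := congr1 (odflt b) e2.
      subst y; case: (f2E x); first by rewrite !inE xA andbT; apply/eqP.
      by move=> y2; rewrite e1 => -[<-]; rewrite !inE eqxx.
    * by apply: f2I; rewrite !inE ?xA ?x'A andbT; apply/eqP.
Qed.
End Hall.
Import GRing.Theory.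
Local Open Scope ring_scope.

Section Core.
Variable k : fieldType.

Lemma sum_neq0_ex (I : finType) (P : pred I) (F : I -> k) :
  \sum_(i | P i) F i != 0 -> exists i, P i && (F i != 0).
Proof.
case: (pickP (fun i => P i && (F i != 0))) => [i Hi _|H]; first by exists i.
move/negP; case; apply/eqP; apply: big1 => i Pi.
by move: (H i); rewrite Pi /= => /negbFE/eqP.
Qed.

Definition mpow K (M : 'M[k]_K) j := iter j (fun P => P *m M) 1%:M.

Lemma mpow_level K (M : 'M[k]_K) (rho : 'I_K -> nat) :
  (forall i i', M i i' != 0 -> (rho i' < rho i)%N) ->
  forall j i i', mpow M j i i' != 0 -> (rho i' + j <= rho i)%N.
Proof.
move=> HM; elim=> [|j IH] i i' /=.
  rewrite mxE; case: (i =P i') => [-> _|_]; first by rewrite addn0.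
  by rewrite mulr0n eqxx.
rewrite mxE => /sum_neq0_ex [r /=]; rewrite mulf_eq0 negb_or => /andP[h1 h2].
move: (IH _ _ h1) (HM _ _ h2) => H1 H2.
by rewrite addnS; apply: leq_trans H1; rewrite ltn_add2r.
Qed.

Lemma tele K (M : 'M[k]_K) j :
  (\sum_(i < j) mpow M i) *m (1%:M - M) = 1%:M - mpow M j.
Proof.
elim: j => [|j IH]; first by rewrite big_ord0 mul0mx /= subrr.
rewrite big_ord_recr /= mulmxDl IH mulmxBr mulmx1.
by rewrite addrA subrK.
Qed.

Lemma core_rank m n (A : 'M[k]_(m,n)) (B : 'M[k]_(n,m)) (E : 'I_m -> 'I_n -> bool)
  (lt : rel 'I_m) :
  A *m B = 1%:M ->
  (forall x y z, lt x y -> lt y z -> lt x z) -> (forall x, ~~ lt x x) ->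
  (forall p p' q, A p q != 0 -> B q p' != 0 -> ~~ E p q -> ~~ E p' q -> lt p' p) ->
  forall X : {set 'I_m}, (#|X| <= #|[set q | [exists p in X, E p q]]|)%N.
Proof.
move=> AB ltT ltI key X.
set N := [set q | [exists p in X, E p q]].
set K := #|X|; set L := #|N|.
pose AXN : 'M[k]_(K, L) := \matrix_(i, j) A (enum_val i) (enum_val j).
pose BNX : 'M[k]_(L, K) := \matrix_(j, i) B (enum_val j) (enum_val i).
pose Mm : 'M[k]_K := \matrix_(i, i') \sum_(q | q \notin N) A (enum_val i) q * B q (enum_val i').
have e1 : AXN *m BNX = 1%:M - Mm.
  apply/matrixP => i i'; rewrite !mxE.
  have := congr1 (fun M : 'M[k]_m => M (enum_val i) (enum_val i')) AB; rewrite !mxE /=.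
  rewrite (inj_eq enum_val_inj) => <-.
  rewrite (bigID (fun q => q \in N)) /= addrK.
  rewrite [in RHS]big_enum_val /=.
  by apply: eq_bigr => j _; rewrite !mxE.
pose rho (i : 'I_K) := #|[set r : 'I_K | lt (enum_val r) (enum_val i)]|.
have Hrho : forall i i', Mm i i' != 0 -> (rho i' < rho i)%N.
  move=> i i'; rewrite mxE => /sum_neq0_ex [q /andP[qN]].
  rewrite mulf_eq0 negb_or => /andP[hA hB].
  have hi := enum_valP i; have hi' := enum_valP i'.
  have nE : forall p, p \in X -> ~~ E p q.
    move=> p pX; apply/negP => Epq; move/negP: qN; apply.
    by rewrite inE; apply/existsP; exists p; rewrite pX.
  have hlt := key _ _ _ hA hB (nE _ hi) (nE _ hi').
  apply: proper_card; rewrite properE; apply/andP; split.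
    apply/subsetP => r; rewrite !inE => h; exact: ltT h hlt.
  apply/subsetPn; exists i'; rewrite !inE //; exact: ltI.
have rhoK : forall i, (rho i < K)%N.
  move=> i; rewrite -[X in (_ < X)%N]card_ord -cardsT; apply: proper_card.
  rewrite properT; apply/eqP => e; move: (in_setT i); rewrite -e inE.
  by move: (ltI (enum_val i)) => /negbTE ->.
have nil : mpow Mm K = 0.
  apply/matrixP => i i'; rewrite mxE; apply/eqP; apply/negP => /negP H.
  have H1 := mpow_level Hrho H.
  have := leq_trans (leq_addl (rho i') K) H1.
  by rewrite leqNgt rhoK.
have inv : (\sum_(j < K) mpow Mm j) *m (1%:M - Mm) = 1%:M.
  by rewrite tele nil subr0.
have : (K <= \rank ((1%:M : 'M[k]_K) - Mm)%R)%N.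
  have := mxrankM_maxr (\sum_(j < K) mpow Mm j) (1%:M - Mm).
  by rewrite inv mxrank1.
rewrite -e1 => H; apply: leq_trans H _.
apply: leq_trans (mxrankM_maxl _ _) (rank_leq_col _).
Qed.
End Core.
Lemma RlebP s t : reflect (Rle s t) (Rleb s t).
Proof. rewrite /Rleb; case: Rle_dec => h; constructor => //. Qed.

Lemma ble_lam eps b b' : ble b b' -> ble (lam eps b) (lam eps b').
Proof.
case: b => [|s i|] //; case: b' => [|t j|] //=.
case/andP => -> /RlebP h; apply/RlebP; lra.
Qed.

Lemma ble_negT b : ble NegInf b. Proof. by []. Qed.
Lemma ble_posT b : ble b PosInf. Proof. by case: b. Qed.

Lemma inL_neg (I : pred bpt) : inL I -> I NegInf.
Proof. by case. Qed.

Lemma inL_down (I : pred bpt) x y : inL I -> ble x y -> I y -> I x.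
Proof.
case=> [[_ conv _] hN _] hxy hy.
exact: (conv NegInf x y hN hy (ble_negT x) hxy).
Qed.

Lemma inL_pos (I : pred bpt) : inL I -> ~~ I PosInf.
Proof.
move=> HI; apply/negP => hP.
case: HI => [[_ conv _] hN [b hb]].
by move/negP: hb; apply; exact: (conv NegInf b PosInf hN hP (ble_negT b) (ble_posT b)).
Qed.

Definition R1 eps (I J : pred bpt) := forall b, J (lam eps b) -> I b.

Section IV.
Variable k : fieldType.

Lemma interleaved_sym eps (V W : bmod k) : interleaved eps V W -> interleaved eps W V.
Proof. by case=> a [b [h1 h2 h3 h4]]; exists b, a; split. Qed.

Lemma ivmod_sig d (I : pred bpt) : I NegInf -> significant d (ivmod k I).
Proof.
move=> HI Htriv; have := Htriv NegInf => /=.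
have x : 'I_(nat_of_bool (I NegInf)) by apply: (@Ordinal _ 0); rewrite HI.
move/matrixP/(_ x x); rewrite !mxE => /eqP; by rewrite oner_eq0.
Qed.

Lemma ivmod_interleaved eps (I J : pred bpt) : inL I -> inL J -> R1 eps I J -> R1 eps J I ->
  interleaved eps (ivmod k I) (ivmod k J).
Proof.
move=> HI HJ RIJ RJI.
exists (fun b => const_mx 1), (fun b => const_mx 1); split.
- move=> b b' bb'; apply/matrixP => x y /=.
  have Ib : I b by case: x => x /=; case: (I b).
  have Jb' : J (lam eps b') by case: y => y /=; case: (J (lam eps b')).
  rewrite !mxE.
  under eq_bigr do rewrite !mxE mulr1.
  under [in RHS]eq_bigr do rewrite !mxE mulr1.
  rewrite !sumr_const !card_ord.
  by rewrite (RIJ _ Jb') (inL_down HJ (ble_lam eps bb') Jb').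
- move=> b b' bb'; apply/matrixP => x y /=.
  have Jb : J b by case: x => x /=; case: (J b).
  have Ib' : I (lam eps b') by case: y => y /=; case: (I (lam eps b')).
  rewrite !mxE.
  under eq_bigr do rewrite !mxE mulr1.
  under [in RHS]eq_bigr do rewrite !mxE mulr1.
  rewrite !sumr_const !card_ord.
  by rewrite (RJI _ Ib') (inL_down HI (ble_lam eps bb') Ib').
- move=> b; apply/matrixP => x y /=.
  have Ib : I (lam eps (lam eps b)) by case: y => y /=; case: (I (lam eps (lam eps b))).
  rewrite !mxE.
  under eq_bigr do rewrite !mxE mulr1.
  by rewrite sumr_const card_ord (RJI _ Ib).
- move=> b; apply/matrixP => x y /=.
  have Jb : J (lam eps (lam eps b)) by case: y => y /=; case: (J (lam eps (lam eps b))).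
  rewrite !mxE.
  under eq_bigr do rewrite !mxE mulr1.
  by rewrite sumr_const card_ord (RIJ _ Jb).
Qed.
End IV.
Section Ext.
Variable k : fieldType.

Lemma dsum_mem m (X : 'I_m -> pred bpt) b (p : 'I_m) : (val p \in dsum_idx X b) = X p b.
Proof. by rewrite /dsum_idx (mem_map val_inj) mem_filter mem_enum andbT. Qed.

Lemma dsum_ex m (X : 'I_m -> pred bpt) b i : i \in dsum_idx X b -> exists2 p : 'I_m, val p = i & X p b.
Proof. by case/mapP => p; rewrite mem_filter => /andP[Xp _] ->; exists p. Qed.

Lemma dsum_neg m (X : 'I_m -> pred bpt) : (forall p, X p NegInf) -> dsum_idx X NegInf = iota 0 m.
Proof.
move=> H; rewrite /dsum_idx.
have -> : [seq p <- enum 'I_m | X p NegInf] = enum 'I_m by apply/all_filterP/allP => p _; exact: H.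
exact: val_enum_ord.
Qed.

Lemma dsum_nth_neg0 m (X : 'I_m -> pred bpt) (H : forall p, X p NegInf)
   i : (i < size (dsum_idx X NegInf))%N -> nth 0%N (dsum_idx X NegInf) i = i.
Proof. by rewrite (dsum_neg H) size_iota => am; rewrite nth_iota. Qed.

Lemma dsum_nth_neg m (X : 'I_m -> pred bpt) (H : forall p, X p NegInf)
   (a : 'I_(bdim (dsum k X) NegInf)) : nth 0%N (dsum_idx X NegInf) a = val a.
Proof. exact: dsum_nth_neg0 (ltn_ord a). Qed.

Lemma extract m n (X : 'I_m -> pred bpt) (Y : 'I_n -> pred bpt) eps
  (alpha : forall b, 'M[k]_(bdim (dsum k X) b, bdim (dsum k Y) (lam eps b))) :
  (forall p, X p NegInf) -> (forall q, Y q NegInf) ->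
  is_morph (V := dsum k X) (W := shift eps (dsum k Y)) alpha ->
  forall (a : 'I_(bdim (dsum k X) NegInf)) (c : 'I_(bdim (dsum k Y) NegInf)) (p : 'I_m) (q : 'I_n),
  val a = val p -> val c = val q -> alpha NegInf a c != 0 -> R1 eps (X p) (Y q).
Proof.
move=> HX HY Hm a c p q ap cq Hne b' Yq.
apply/idPn => nX.
have qin : val q \in dsum_idx Y (lam eps b') by rewrite dsum_mem.
pose c' : 'I_(bdim (dsum k Y) (lam eps b')) := Ordinal (eq_ind_r is_true qin (index_mem (val q) (dsum_idx Y (lam eps b')))).
have c'E : nth 0%N (dsum_idx Y (lam eps b')) c' = val q by rewrite /= nth_index.
move: (Hm NegInf b' isT) => /matrixP /(_ a c'); rewrite !mxE.
rewrite big1; last first.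
  move=> r _; rewrite !mxE (dsum_nth_neg HX) ap.
  case: eqP => [e|]; last by rewrite mul0r.
  exfalso; move: (mem_nth 0%N (ltn_ord r)); rewrite -e dsum_mem.
  by move/negP: nX.
rewrite (bigD1 c) //= !mxE (dsum_nth_neg HY) c'E cq eqxx mulr1 big1 ?addr0.
  by move=> e; move/eqP: Hne; rewrite -e.
move=> s sc; rewrite !mxE (dsum_nth_neg HY) c'E -cq.
case: eqP => [e|]; last by rewrite mulr0.
by move/eqP: sc; case; apply: val_inj.
Qed.
End Ext.
Section Pot.
Local Open Scope R_scope.

Definition posR (x1 x2 x3 : R) : Prop := x1 > 0 \/ (x1 = 0 /\ (x2 > 0 \/ (x2 = 0 /\ x3 > 0))).
Definition nnR (x1 x2 x3 : R) : Prop := posR x1 x2 x3 \/ (x1 = 0 /\ x2 = 0 /\ x3 = 0).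

Lemma posR_add x1 x2 x3 y1 y2 y3 : posR x1 x2 x3 -> nnR y1 y2 y3 -> posR (x1+y1) (x2+y2) (x3+y3).
Proof. rewrite /nnR /posR; lra. Qed.

Lemma nnR_add x1 x2 x3 y1 y2 y3 : nnR x1 x2 x3 -> nnR y1 y2 y3 -> nnR (x1+y1) (x2+y2) (x3+y3).
Proof. rewrite /nnR /posR; lra. Qed.

Lemma posR_ext x1 x2 x3 y1 y2 y3 : x1 = y1 -> x2 = y2 -> x3 = y3 -> posR x1 x2 x3 -> posR y1 y2 y3.
Proof. by move=> -> -> ->. Qed.

Lemma posR_irr : ~ posR 0 0 0.
Proof. rewrite /posR; lra. Qed.

Definition downc (D : R -> bool) := forall s t, s <= t -> D t -> D s.

Definition supR (D : R -> bool) : R := epsilon (inhabits 0) (fun d => is_lub (fun t => D t) d).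

Definition phi (D : R -> bool) : R * R * R :=
  if excluded_middle_informative (forall t, D t) then (1, 0, 0)
  else if excluded_middle_informative (exists t, D t) then
    (0, supR D, if D (supR D) then 1 else 0)
  else (-1, 0, 0).

Lemma supR_spec D : downc D -> ~ (forall t, D t) -> (exists t, D t) ->
  (forall t, D t -> t <= supR D) /\ (forall t, t < supR D -> D t).
Proof.
move=> dc nall ex.
have [u nu] : exists u, ~~ D u.
  apply: NNPP => h; apply: nall => t; apply: NNPP => nt; apply: h; exists t; exact/negP.
have lub : is_lub (fun t => D t) (supR D).
  rewrite /supR; apply: epsilon_spec.
  have [m hm] : {m | is_lub (fun t => D t) m}.
    apply: completeness.
    + exists u => t Dt; apply: Rnot_lt_le => ut.
      by move/negP: nu; apply; apply: (dc u t) => //; lra.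
    + exact: ex.
  by exists m.
case: lub => ub lst; split; first exact: ub.
move=> t ts; apply: NNPP => nt.
have : supR D <= t.
  apply: lst => s Ds; apply: Rnot_lt_le => ts'.
  by apply: nt; apply: (dc t s) => //; lra.
lra.
Qed.

Variable e : R.
Hypothesis e0 : 0 <= e.

Lemma phi_cases D : downc D ->
  (phi D = (1,0,0) /\ forall t, D t) \/
  (phi D = (-1,0,0) /\ forall t, ~~ D t) \/
  (exists d, phi D = (0, d, if D d then 1 else 0) /\ (forall t, D t -> t <= d) /\
     (forall t, t < d -> D t)).
Proof.
move=> dc; rewrite /phi.
case: excluded_middle_informative => [all|nall]; first by left.
case: excluded_middle_informative => [ex|nex].
  right; right; exists (supR D); split => //; exact: supR_spec.
right; left; split => // t; apply/negP => Dt; apply: nex; by exists t.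
Qed.

Lemma P1 D E : downc D -> downc E -> (forall t, E (t + e) -> D t) ->
  nnR ((phi D).1.1 - (phi E).1.1) ((phi D).1.2 + e - (phi E).1.2) ((phi D).2 - (phi E).2).
Proof.
move=> dD dE H.
case: (phi_cases dD) => [[-> Dall]|[[-> Dn]|[d [-> [dub dlb]]]]];
case: (phi_cases dE) => [[-> Eall]|[[-> En]|[c [-> [cub clb]]]]] /=; rewrite /nnR /posR.
- case: (Rle_lt_or_eq_dec _ _ e0) => he.
    left; right; split; [lra|left; lra].
  right; split; [lra|split; lra].
- left; left; lra.
- left; left; lra.
- by case/negP: (Dn 0); apply: H; apply: Eall.
- case: (Rle_lt_or_eq_dec _ _ e0) => he.
    left; right; split; [lra|left; lra].
  right; split; [lra|split; lra].
- by case/negP: (Dn (c - 1 - e)); apply: H; apply: clb; lra.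
- have := dub (d + 1) (H _ (Eall _)); lra.
- left; left; lra.
- have cde : c <= d + e.
    apply: Rnot_lt_le => hc.
    have := dub ((c - e + d) / 2) (H _ (clb _ _)); lra.
  case: (Rle_lt_or_eq_dec _ _ cde) => hc.
    left; right; split; [lra|left; lra].
  have hED : (E c -> D d).
    move=> Ec; have := H (c - e).
    rewrite (_ : c - e + e = c); last by lra.
    rewrite (_ : c - e = d); last by lra.
    by apply.
  move: hED; case: (E c); case: (D d) => h.
  + right; split; [lra|split; lra].
  + by have := h isT.
  + left; right; split; [lra|right; split; lra].
  + right; split; [lra|split; lra].
Qed.

Lemma P2 D E : downc D -> downc E -> (exists t, D (t + e) /\ ~~ E t) ->
  posR ((phi D).1.1 - (phi E).1.1) ((phi D).1.2 - e - (phi E).1.2) ((phi D).2 - (phi E).2).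
Proof.
move=> dD dE [t [Dt nEt]].
case: (phi_cases dD) => [[-> Dall]|[[-> Dn]|[d [-> [dub dlb]]]]];
case: (phi_cases dE) => [[-> Eall]|[[-> En]|[c [-> [cub clb]]]]] /=; rewrite /posR.
- by case/negP: nEt.
- left; lra.
- left; lra.
- by case/negP: nEt.
- by case/negP: (Dn (t + e)).
- by case/negP: (Dn (t + e)).
- by case/negP: nEt.
- left; lra.
- have h1 := dub _ Dt.
  have h2 : c <= t by apply: Rnot_lt_le => ht; move/negP: nEt; apply; apply: clb.
  have : c <= d - e by lra.
  case/Rle_lt_or_eq_dec => hc.
    right; split; [lra|left; lra].
  have -> : d = t + e by lra.
  have -> : c = t by lra.
  rewrite Dt (negbTE nEt).
  right; split; [lra|right; split; lra].
Qed.
End Pot.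
Section Strict.
Local Open Scope R_scope.
Variable e : R.
Hypothesis e0 : 0 <= e.

Definition DL (I : pred bpt) (l : lane) : R -> bool := fun t => I (Pt t l).

Lemma DL_down (I : pred bpt) l : inL I -> downc (DL I l).
Proof.
move=> HI s t st; rewrite /DL => h; apply: (inL_down HI _ h) => /=.
have -> : lane_eqb l l by destruct l.
by apply/RlebP.
Qed.

Definition Phi1 I := (phi (DL I One)).1.1 + (phi (DL I Two)).1.1.
Definition Phi2 I := (phi (DL I One)).1.2 + (phi (DL I Two)).1.2.
Definition Phi3 I := (phi (DL I One)).2 + (phi (DL I Two)).2.

Definition ltI (I' I : pred bpt) := posR (Phi1 I - Phi1 I') (Phi2 I - Phi2 I') (Phi3 I - Phi3 I').

Lemma ltI_trans I1 I2 I3 : ltI I1 I2 -> ltI I2 I3 -> ltI I1 I3.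
Proof.
rewrite /ltI => h1 h2; have := posR_add h2 (or_introl h1).
apply: posR_ext; lra.
Qed.

Lemma ltI_irr I : ~ ltI I I.
Proof. rewrite /ltI /posR; lra. Qed.

Lemma R1_lanes I J : R1 e I J -> forall l t, DL J l (t + e) -> DL I l t.
Proof. by move=> H l t h; apply: (H (Pt t l)). Qed.

Lemma nR1_lanes I J : inL I -> inL J -> ~ R1 e J I -> exists l, exists t, DL I l (t + e) /\ ~~ DL J l t.
Proof.
move=> HI HJ nR; apply: NNPP => hn; apply: nR => b Hb.
apply: NNPP => nJ.
case: b Hb nJ => [|t l|] /= Hb nJ.
- by apply: nJ; exact: inL_neg.
- apply: hn; exists l, t; split => //; exact/negP.
- by move/negP: (inL_pos HI).
Qed.

Lemma strict I I' J : inL I -> inL I' -> inL J ->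
  R1 e I J -> ~ R1 e J I -> R1 e J I' -> ~ R1 e I' J -> ltI I' I.
Proof.
move=> HI HI' HJ r1 nr2 r3 nr4.
have F1 := fun l => P1 e0 ((@DL_down _ l HI)) ((@DL_down _ l HJ)) (fun t h => r1 (Pt t l) h).
have F3 := fun l => P1 e0 ((@DL_down _ l HJ)) ((@DL_down _ l HI')) (fun t h => r3 (Pt t l) h).
have [i [t F2]] := nR1_lanes HI HJ nr2.
have [j [s F4]] := nR1_lanes HJ HI' nr4.
have G2 := P2 ((@DL_down _ i HI)) ((@DL_down _ i HJ)) (ex_intro _ t F2).
have G4 := P2 ((@DL_down _ j HJ)) ((@DL_down _ j HI')) (ex_intro _ s F4).
rewrite /ltI /Phi1 /Phi2 /Phi3.
case: i G2 {F2}; case: j G4 {F4} => G4 G2.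
- have := posR_add (posR_add G2 (or_introl G4)) (nnR_add (F1 Two) (F3 Two)).
  apply: posR_ext; lra.
- have := posR_add (posR_add G2 (or_introl G4)) (nnR_add (F1 Two) (F3 One)).
  apply: posR_ext; lra.
- have := posR_add (posR_add G2 (or_introl G4)) (nnR_add (F1 One) (F3 Two)).
  apply: posR_ext; lra.
- have := posR_add (posR_add G2 (or_introl G4)) (nnR_add (F1 One) (F3 One)).
  apply: posR_ext; lra.
Qed.
End Strict.

Section Main.
Variable k : fieldType.

Lemma gen_mats m n (XV : 'I_m -> pred bpt) (XW : 'I_n -> pred bpt) eps d d'
  (A : 'M[k]_(d,d')) (B : 'M[k]_(d',d)) : d = m -> d' = n ->
  A *m B = 1%:M -> B *m A = 1%:M ->
  (forall (a : 'I_d) (c : 'I_d') p q, val a = val p -> val c = val q -> A a c != 0 -> R1 eps (XV p) (XW q)) ->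
  (forall (c : 'I_d') (a : 'I_d) q p, val c = val q -> val a = val p -> B c a != 0 -> R1 eps (XW q) (XV p)) ->
  exists (A : 'M[k]_(m,n)) (B : 'M[k]_(n,m)), [/\ A *m B = 1%:M, B *m A = 1%:M,
     (forall p q, A p q != 0 -> R1 eps (XV p) (XW q)) &
     (forall q p, B q p != 0 -> R1 eps (XW q) (XV p))].
Proof.
move=> ed ed'; subst d d' => AB BA HA HB; exists A, B; split => //.
- by move=> p q; apply: HA.
- by move=> q p; apply: HB.
Qed.

Lemma bmap_neg1 m (X : 'I_m -> pred bpt) (H : forall p, X p NegInf) :
  bmap (dsum k X) NegInf NegInf = 1%:M.
Proof.
apply/matrixP => a c; rewrite !mxE /= (dsum_nth_neg H) (dsum_nth_neg H).
by rewrite (inj_eq val_inj).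
Qed.

Lemma rank_le m n (A : 'M[k]_(m,n)) (B : 'M[k]_(n,m)) : A *m B = 1%:M -> (m <= n)%N.
Proof.
move=> AB; have := mxrankM_maxl A B; rewrite AB mxrank1 => h.
exact: leq_trans h (rank_leq_col A).
Qed.
End Main.

Definition decb (P : Prop) : bool := if excluded_middle_informative P then true else false.
Lemma decbP (P : Prop) : decb P <-> P.
Proof. by rewrite /decb; case: excluded_middle_informative. Qed.

Theorem proposition4p15 (k : fieldType) (V W : bmod k) (eps : R) :
  is_bmod V -> is_bmod W -> Rle 0 eps ->
  forall (IV : Type) (JV : IV -> pred bpt) (IW : Type) (JW : IW -> pred bpt),
  is_barcode V JV -> is_barcode W JW ->
  forall (m : nat) (fV : 'I_m -> IV), enumL JV fV ->
  forall (n : nat) (fW : 'I_n -> IW), enumL JW fW ->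
  let XV := fun p => JV (fV p) in
  let XW := fun q => JW (fW q) in
  let VL := dsum k XV in
  let WL := dsum k XW in
  let G := fun p q => interleaved eps (ivmod k (XV p)) (ivmod k (XW q)) in
  (* (1) B_{2eps}(V^L) = B(V^L), B_{2eps}(W^L) = B(W^L) *)
  ((forall p, significant (Rplus eps eps) (ivmod k (XV p))) /\
   (forall q, significant (Rplus eps eps) (ivmod k (XW q)))) /\
  (* (2) Hall conditions (H) and (H') *)
  (interleaved eps VL WL ->
     hall (fun p => significant (Rplus eps eps) (ivmod k (XV p))) G /\
     hall (fun q => significant (Rplus eps eps) (ivmod k (XW q))) (fun q p => G p q)) /\
  (* consequence: a bottleneck Lambda_eps-interleaving exists *)
  (interleaved eps VL WL -> bottleneck k eps XV XW).
Proof.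
move=> HV HW e0 IV JV IW JW bV bW m fV [fVinj fVL fVsurj] n fW [fWinj fWL fWsurj] XV XW VL WL G.
have XVL : forall p, inL (XV p) := fVL.
have XWL : forall q, inL (XW q) := fWL.
have XVn : forall p, XV p NegInf := fun p => inL_neg (XVL p).
have XWn : forall q, XW q NegInf := fun q => inL_neg (XWL q).
have GR : forall p q, R1 eps (XV p) (XW q) -> R1 eps (XW q) (XV p) -> G p q.
  by move=> p q h1 h2; apply: ivmod_interleaved.
pose Gb p q := decb (G p q).
have GbP : forall p q, Gb p q <-> G p q by move=> p q; exact: decbP.
have mats : interleaved eps VL WL -> exists (A : 'M[k]_(m,n)) (B : 'M[k]_(n,m)),
    [/\ A *m B = 1%:M, B *m A = 1%:M,
     (forall p q, A p q != 0 -> R1 eps (XV p) (XW q)) &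
     (forall q p, B q p != 0 -> R1 eps (XW q) (XV p))].
  case=> alpha [beta [mA mB iA iB]].
  pose A0 : 'M[k]_(bdim VL NegInf, bdim WL NegInf) := alpha NegInf.
  pose B0 : 'M[k]_(bdim WL NegInf, bdim VL NegInf) := beta NegInf.
  apply: (@gen_mats k m n XV XW eps _ _ A0 B0).
  - by rewrite /= (dsum_neg XVn) size_iota.
  - by rewrite /= (dsum_neg XWn) size_iota.
  - by rewrite /A0 /B0 (iA NegInf) bmap_neg1.
  - by rewrite /A0 /B0 (iB NegInf) bmap_neg1.
  - exact: (extract XVn XWn mA).
  - exact: (extract XWn XVn mB).
have ltdef : forall (r : nat) (Y : 'I_r -> pred bpt), (forall x, inL (Y x)) ->
   exists lt : rel 'I_r, [/\ (forall x y z, lt x y -> lt y z -> lt x z), (forall x, ~~ lt x x) &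
     (forall x y, ltI (Y x) (Y y) -> lt x y)].
  move=> r Y _; exists (fun x y => decb (ltI (Y x) (Y y))); split.
  - move=> x y z /decbP h1 /decbP h2; apply/decbP; exact: ltI_trans h1 h2.
  - by move=> x; apply/negP => /decbP /ltI_irr.
  - by move=> x y h; apply/decbP.
have hall1 : interleaved eps VL WL -> forall X : {set 'I_m},
    (#|X| <= #|[set q | [exists p in X, Gb p q]]|)%N.
  move=> Hint; case: (mats Hint) => A [B [AB BA HA HB]].
  have [lt [ltT ltI ltE]] := ltdef m XV XVL.
  apply: (core_rank AB ltT ltI) => p p' q hA hB nG nG'.
  apply: ltE; apply: (strict e0 (XVL p) (XVL p') (XWL q) (HA _ _ hA)).
  - move=> h; move/negP: nG; apply; apply/GbP; exact: GR (HA _ _ hA) h.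
  - exact: HB _ _ hB.
  - move=> h; move/negP: nG'; apply; apply/GbP; exact: GR h (HB _ _ hB).
have hall2 : interleaved eps VL WL -> forall Y : {set 'I_n},
    (#|Y| <= #|[set p | [exists q in Y, Gb p q]]|)%N.
  move=> Hint; case: (mats Hint) => A [B [AB BA HA HB]].
  have [lt [ltT ltI ltE]] := ltdef n XW XWL.
  apply: (core_rank (E := fun q p => Gb p q) BA ltT ltI) => q q' p hB hA nG nG'.
  apply: ltE; apply: (strict e0 (XWL q) (XWL q') (XVL p) (HB _ _ hB)).
  - move=> h; move/negP: nG; apply; apply/GbP; exact: GR h (HB _ _ hB).
  - exact: HA _ _ hA.
  - move=> h; move/negP: nG'; apply; apply/GbP; exact: GR (HA _ _ hA) h.
split.
  split => p; apply: ivmod_sig; [exact: XVn | exact: XWn].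
split.
  move=> Hint; split.
  - move=> X _; exists [set q | [exists p in X, Gb p q]]; split; last exact: hall1.
    move=> q; rewrite inE; split.
    + by case/existsP => p /andP[pX /GbP Gpq]; exists p.
    + by case=> p pX /GbP Gpq; apply/existsP; exists p; rewrite pX.
  - move=> Y _; exists [set p | [exists q in Y, Gb p q]]; split; last exact: hall2.
    move=> p; rewrite inE; split.
    + by case/existsP => q /andP[qY /GbP Gpq]; exists q.
    + by case=> q qY /GbP Gpq; apply/existsP; exists q; rewrite qY.
move=> Hint.
have mn : m = n.
  case: (mats Hint) => A [B [AB BA _ _]].
  by apply/eqP; rewrite eqn_leq (rank_le AB) (rank_le BA).
have [f [fE fI]] : exists f : 'I_m -> option 'I_n,
    (forall x, x \in [set: 'I_m] -> exists2 y, f x = Some y & (y \in [set: 'I_n]) && Gb x y) /\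
    (forall x x' y, x \in [set: 'I_m] -> x' \in [set: 'I_m] -> f x = Some y -> f x' = Some y -> x = x').
  apply: hall_thm => X _.
  apply: leq_trans (hall1 Hint X) _; apply: subset_leq_card.
  by apply/subsetP => q; rewrite !inE.
exists f; split.
- by move=> p p' q; apply: fI; rewrite in_setT.
- move=> p q e; case: (fE p (in_setT p)) => y; rewrite e => -[<-] /andP[_ /GbP //].
- move=> p e; case: (fE p (in_setT p)) => y; by rewrite e.
- move=> q nq; exfalso.
  pose g p := odflt q (f p).
  have ginj : injective g.
    move=> p p'; rewrite /g.
    case: (fE p (in_setT p)) => y ey _; case: (fE p' (in_setT p')) => y' ey' _.
    rewrite ey ey' /= => eyy; subst y'.
    exact: (fI p p' y (in_setT _) (in_setT _) ey ey').
  have : q \in codom g by apply: inj_card_onto => //; rewrite !card_ord mn.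
  case/codomP => p; rewrite /g; case: (fE p (in_setT p)) => y e _; rewrite e /= => eq.
  by apply: (nq p); rewrite e eq.
Qed.
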